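(* Let $K$ be an algebraically closed field and $Q$ an acyclic quiver that contains as a subquiver distinct vertices $v_0,v_1,v_2,\dots$ with an arrow $v_{n+1}\to v_n$ for each $n\in\omega$. Let $\mathcal X$ be a finite dimensional $K$-linear representation of $Q$ such that for each $n\in\omega$, $\mathcal X_{v_n}\neq\{0\}$ and $\mathcal X\restriction\overline{\{v_n\}}^Q$ is isomorphic to a direct sum of finitely many copies of the representation $F(e_{v_n}KQ)\restriction\overline{\{v_n\}}^Q$. Then $\mathrm{Ext}^1_{KQ}(G(\mathcal X),KQ)\neq0$.
   Context: A quiver $Q=(Q_0,Q_1)$ is a directed graph (possibly infinite); acyclic means no nontrivial path has equal source and target. Paths are composable sequences of arrows written left to right, with trivial paths $e_v$; the path algebra $KQ$ has $K$-basis all paths, product = concatenation when the target of the first equals the source of the second, else $0$. Modules are right modules. A $K$-linear representation $\mathcal X$ assigns vector spaces $\mathcal X_v$ and linear maps $\mathcal X_a:\mathcal X_{s(a)}\to\mathcal X_{t(a)}$; finite dimensional means each $\mathcal X_v$ is finite dimensional. For a $KQ$-module $M$, $F(M)$ is the representation with $F(M)_v=Me_v$ and $F(M)_a(x)=xa$. $G(\mathcal X)$ is the $KQ$-module on $\bigoplus_{v}\mathcal X_v$ with $me_w$ the $\mathcal X_w$-component of $m$ and $ma=\mathcal X_a(me_{s(a)})$. The closure $\overline{\{v\}}^Q$ is the subquiver whose vertices are those reachable from $v$ by a path (including $v$), with all arrows whose source is such a vertex; for a subquiver $P$, $\mathcal X\restriction P$ denotes the restriction of $\mathcal X$ to the vertices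 and arrows of $P$. *)

(* Defs.v *)
From HB Require Import structures.
From mathcomp Require Import all_boot all_algebra.
From mathcomp Require Import boolp classical_sets cardinality fsbigop.

Set Implicit Arguments.
Unset Strict Implicit.
Unset Printing Implicit Defensive.

Import GRing.Theory.
Local Open Scope ring_scope.
Local Open Scope classical_set_scope.

Section DSum.
Variables (K : pzRingType) (I : Type) (F : I -> lmodType K).

Record dsum := DSum {
  dval : forall i, F i ;
  dvalP : finite_set [set i | dval i <> 0] }.

HB.instance Definition _ := gen_eqMixin dsum.
HB.instance Definition _ := gen_choiceMixin dsum.

Lemma dsum_eq (x y : dsum) : dval x = dval y -> x = y.
Proof.
case: x y => [f fP] [g gP] /= E; subst g.
by rewrite (Prop_irrelevance fP gP).
Qed.

Lemma dsum0_fin : finite_set [set i | (0 : F i) <> 0].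
Proof. by apply: (sub_finite_set _ (finite_set0 I)) => i /=. Qed.

Definition dsum0 := DSum dsum0_fin.

Lemma dsumD_fin (x y : dsum) : finite_set [set i | dval x i + dval y i <> 0].
Proof.
apply: (sub_finite_set (B := [set i | dval x i <> 0] `|` [set i | dval y i <> 0])).
  move=> i /= H; case: (pselect (dval x i = 0)) => Hx; last by left.
  by right => Hy; apply: H; rewrite Hx Hy addr0.
by rewrite finite_setU; split; apply: dvalP.
Qed.

Definition dsumD (x y : dsum) := DSum (dsumD_fin x y).

Lemma dsumN_fin (x : dsum) : finite_set [set i | - dval x i <> 0].
Proof.
apply: (sub_finite_set _ (dvalP x)) => i /= H Hx.
by apply: H; rewrite Hx oppr0.
Qed.

Definition dsumN (x : dsum) := DSum (dsumN_fin x).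

Lemma dsumZ_fin (a : K) (x : dsum) : finite_set [set i | a *: dval x i <> 0].
Proof.
apply: (sub_finite_set _ (dvalP x)) => i /= H Hx.
by apply: H; rewrite Hx scaler0.
Qed.

Definition dsumZ (a : K) (x : dsum) := DSum (dsumZ_fin a x).

Lemma dsumA : associative dsumD.
Proof. by move=> x y z; apply: dsum_eq; apply: functional_extensionality_dep => i /=; rewrite addrA. Qed.
Lemma dsumC : commutative dsumD.
Proof. by move=> x y; apply: dsum_eq; apply: functional_extensionality_dep => i /=; rewrite addrC. Qed.
Lemma dsum0D : left_id dsum0 dsumD.
Proof. by move=> x; apply: dsum_eq; apply: functional_extensionality_dep => i /=; rewrite add0r. Qed.
Lemma dsumND : left_inverse dsum0 dsumN dsumD.
Proof. by move=> x; apply: dsum_eq; apply: functional_extensionality_dep => i /=; rewrite addNr. Qed.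

HB.instance Definition _ := GRing.isZmodule.Build dsum dsumA dsumC dsum0D dsumND.

Lemma dsumZA a b (x : dsum) : dsumZ a (dsumZ b x) = dsumZ (a * b) x.
Proof. by apply: dsum_eq; apply: functional_extensionality_dep => i /=; rewrite scalerA. Qed.
Lemma dsumZ1 : left_id 1 dsumZ.
Proof. by move=> x; apply: dsum_eq; apply: functional_extensionality_dep => i /=; rewrite scale1r. Qed.
Lemma dsumZDr : right_distributive dsumZ (@GRing.add dsum).
Proof. by move=> a x y; apply: dsum_eq; apply: functional_extensionality_dep => i /=; rewrite scalerDr. Qed.
Lemma dsumZDl (x : dsum) : {morph dsumZ^~ x : a b / a + b}.
Proof. by move=> a b; apply: dsum_eq; apply: functional_extensionality_dep => i /=; rewrite scalerDl. Qed.

HB.instance Definition _ := GRing.Zmodule_isLmodule.Build K dsum dsumZA dsumZ1 dsumZDr dsumZDl.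

End DSum.

Arguments DSum {K I F} dval dvalP.
Arguments dval {K I F} d i.

Section DInj.
Variables (K : pzRingType) (I : Type) (F : I -> lmodType K).

Definition dinj_fun (w : I) (y : F w) : forall u, F u :=
  fun u => match pselect (w = u) with
           | left H => eq_rect w F y u H
           | right _ => 0
           end.

Lemma dinj_fin (w : I) (y : F w) : finite_set [set u | dinj_fun y u <> 0].
Proof.
apply: (sub_finite_set _ (finite_set1 w)) => u /=.
by rewrite /dinj_fun; case: pselect => // H _.
Qed.

Definition dinj (w : I) (y : F w) : dsum F := DSum (dinj_fun y) (dinj_fin y).
End DInj.

Record quiver := Quiver {
  qV : Type ;
  qA : Type ;
  qs : qA -> qV ;
  qt : qA -> qV }.

Section Paths.
Variable Q : quiver.

(* a_1 ... a_n is a path starting at v (arrows composed left to right) *)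
Fixpoint composable (v : qV Q) (l : seq (qA Q)) : Prop :=
  match l with
  | [::] => True
  | a :: l' => qs a = v /\ composable (qt a) l'
  end.

Fixpoint endpt (v : qV Q) (l : seq (qA Q)) : qV Q :=
  match l with
  | [::] => v
  | a :: l' => endpt (qt a) l'
  end.

Record qpath := QPath {
  psrc : qV Q ;
  parr : seq (qA Q) ;
  pok : composable psrc parr }.

HB.instance Definition _ := gen_eqMixin qpath.
HB.instance Definition _ := gen_choiceMixin qpath.

Definition ptgt (p : qpath) : qV Q := endpt (psrc p) (parr p).

Definition triv (v : qV Q) : qpath := @QPath v [::] I.

Definition parrow (a : qA Q) : qpath := @QPath (qs a) [:: a] (conj erefl I).

Lemma composable_cat v l1 l2 :
  composable v l1 -> composable (endpt v l1) l2 -> composable v (l1 ++ l2).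
Proof.
elim: l1 v => [|a l1 IH] v //= [Ha H1] H2; split => //; exact: IH.
Qed.

Lemma endpt_cat v l1 l2 : endpt v (l1 ++ l2) = endpt (endpt v l1) l2.
Proof. by elim: l1 v => [|a l1 IH] v //=. Qed.

Lemma pcat_ok (p q : qpath) : ptgt p = psrc q ->
  composable (psrc p) (parr p ++ parr q).
Proof.
move=> H; apply: composable_cat; first exact: pok.
by rewrite -/(ptgt p) H; exact: pok.
Qed.

Definition pcat (p q : qpath) (H : ptgt p = psrc q) : qpath :=
  @QPath (psrc p) (parr p ++ parr q) (pcat_ok H).

Lemma ptgt_pcat (p q : qpath) (H : ptgt p = psrc q) : ptgt (pcat H) = ptgt q.
Proof. by rewrite /ptgt /= endpt_cat -/(ptgt p) H. Qed.

Definition acyclic : Prop :=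
  forall p : qpath, psrc p = ptgt p -> parr p = [::].

(* w lies in the closure of {v}: reachable from v by a path *)
Definition reachable (v w : qV Q) : Prop :=
  exists p : qpath, psrc p = v /\ ptgt p = w.

End Paths.

Arguments triv {Q} v.
Arguments parrow {Q} a.

Section Reps.
Variables (K : fieldType) (Q : quiver).

Record rep := Rep {
  rsp : qV Q -> lmodType K ;
  rmap : forall a : qA Q, rsp (qs a) -> rsp (qt a) }.
Arguments rmap : clear implicits.

Definition rep_linear (X : rep) : Prop := forall a, linear (rmap X a).

Definition findim (U : lmodType K) : Prop :=
  exists s : seq U, forall x : U,
    exists c : 'I_(size s) -> K, x = \sum_(i < size s) c i *: s`_i.

Definition rep_findim (X : rep) : Prop := forall v, findim (rsp X v).

(* X restricted to the full subquiver on the vertex set P (with all arrows *)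
(* whose source lies in P, P being closed under successors) is isomorphic  *)
(* to Y restricted to it.                                                   *)
Definition rep_iso_on (P : set (qV Q)) (X Y : rep) : Prop :=
  exists phi : forall v, rsp X v -> rsp Y v,
    (forall v, P v -> linear (phi v) /\ bijective (phi v)) /\
    (forall a, P (qs a) -> forall x, phi (qt a) (rmap X a x) = rmap Y a (phi (qs a) x)).

Definition rep_pow (k : nat) (Y : rep) : rep :=
  @Rep (fun w => {ffun 'I_k -> rsp Y w})
       (fun a y => [ffun i => rmap Y a (y i)]).

Fixpoint rpathl (X : rep) (v : qV Q) (l : seq (qA Q)) :
    composable v l -> rsp X v -> rsp X (endpt v l) :=
  match l return composable v l -> rsp X v -> rsp X (endpt v l) with
  | [::] => fun _ x => x
  | a :: l' => fun H x =>
      @rpathl X (qt a) l' (proj2 H) (rmap X a (eq_rect v (rsp X) x (qs a) (esym (proj1 H))))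
  end.

Definition rpath (X : rep) (p : qpath Q) : rsp X (psrc p) -> rsp X (ptgt p) :=
  @rpathl X (psrc p) (parr p) (pok p).
Arguments rpath : clear implicits.

(* A (K-linear) right KQ-module, given by the right action of the basis     *)
(* paths of KQ; the axioms are in is_kqmod.                                 *)
Record kqmod := KQMod {
  mcar : lmodType K ;
  mact : mcar -> qpath Q -> mcar }.
Arguments mact : clear implicits.

Definition is_kqmod (M : kqmod) : Prop :=
  (forall p, linear (fun m => mact M m p)) /\
  (forall m (p q : qpath Q) (H : ptgt p = psrc q),
      mact M (mact M m p) q = mact M m (pcat H)) /\
  (forall m (p q : qpath Q), ptgt p <> psrc q -> mact M (mact M m p) q = 0).

Definition kqhom (M N : kqmod) (f : mcar M -> mcar N) : Prop :=
  linear f /\ forall m p, f (mact M m p) = mact N (f m) p.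

(* Ext^1_{KQ}(M, N) <> 0, via Yoneda: there is a non-split short exact      *)
(* sequence 0 -> N -> E -> M -> 0 of right KQ-modules.                      *)
Definition Ext1_neq0 (M N : kqmod) : Prop :=
  exists (E : kqmod) (i : mcar N -> mcar E) (pi : mcar E -> mcar M),
    is_kqmod E /\ kqhom i /\ kqhom pi /\ injective i /\ (forall x, exists e, pi e = x) /\
    (forall e, pi e = 0 <-> exists n, i n = e) /\
    ~ (exists sigma : mcar M -> mcar E, kqhom sigma /\ forall m, pi (sigma m) = m).

(* The path algebra KQ as a right module over itself:                       *)
(* K-vector space with basis the paths, right action by concatenation.      *)
Definition KQcar : lmodType K := dsum (fun _ : qpath Q => K^o).

Definition pbasis (r : qpath Q) : KQcar := @dinj K (qpath Q) (fun _ => K^o) r (1 : K).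

Definition pmul (p q : qpath Q) : KQcar :=
  match pselect (ptgt p = psrc q) with
  | left H => pbasis (pcat H)
  | right _ => 0
  end.

Definition kq_act (x : KQcar) (q : qpath Q) : KQcar :=
  \sum_(p \in [set: qpath Q]) (dval x p : K) *: pmul p q.

Definition KQreg : kqmod := @KQMod KQcar kq_act.

(* G(X): the module on (+)_v X_v with m e_w the X_w-component of m and      *)
(* m p = X_p(m e_{s(p)}) placed in the component t(p).                      *)
Definition GX (X : rep) : kqmod :=
  @KQMod (dsum (rsp X))
         (fun m p => @dinj K (qV Q) (rsp X) (ptgt p) (rpath X p (dval m (psrc p)))).

(* F(e_v KQ): the representation w |-> e_v KQ e_w, the K-span of the paths *)
(* from v to w, with arrows acting by right multiplication.                  *)
Definition pathsft (v w : qV Q) := {p : qpath Q | psrc p = v /\ ptgt p = w}.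
HB.instance Definition _ v w := gen_eqMixin (pathsft v w).
HB.instance Definition _ v w := gen_choiceMixin (pathsft v w).

Definition pext (v : qV Q) (a : qA Q) (p : pathsft v (qs a)) : pathsft v (qt a) :=
  exist _ (@pcat Q (sval p) (parrow a) (proj2 (svalP p) : ptgt (sval p) = psrc (parrow a)))
          (conj (proj1 (svalP p))
                (ptgt_pcat (proj2 (svalP p) : ptgt (sval p) = psrc (parrow a)))).

Definition Fe (v : qV Q) : rep :=
  @Rep (fun w => dsum (fun _ : pathsft v w => K^o))
       (fun a y => \sum_(p \in [set: pathsft v (qs a)])
                      (dval y p : K) *: @dinj K (pathsft v (qt a)) (fun _ => K^o) (pext p) (1 : K)).

End Reps.

(* Main.v *)
Require Import Defs.
From HB Require Import structures.
From mathcomp Require Import all_boot all_algebra.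
From mathcomp Require Import boolp classical_sets cardinality fsbigop.
Set Implicit Arguments. Unset Strict Implicit. Unset Printing Implicit Defensive.
Import GRing.Theory.
Local Open Scope ring_scope.
Local Open Scope classical_set_scope.
Section KQ.
Variables (K : fieldType) (Q : quiver).
Local Notation KQ := (KQcar K Q).
Local Notation path := (qpath Q).

Lemma dvalD (I : Type) (F : I -> lmodType K) (x y : dsum F) i : dval (x + y) i = dval x i + dval y i.
Proof. by []. Qed.
Lemma dvalZ (I : Type) (F : I -> lmodType K) a (x : dsum F) i : dval (a *: x) i = a *: dval x i.
Proof. by []. Qed.
Lemma dval0 (I : Type) (F : I -> lmodType K) i : dval (0 : dsum F) i = 0.
Proof. by []. Qed.
Lemma dval_sum (I : Type) (F : I -> lmodType K) (J : Type) (S : seq J) (G : J -> dsum F) i :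
  dval (\sum_(j <- S) G j) i = \sum_(j <- S) dval (G j) i.
Proof. by elim: S => [|a S IH]; rewrite ?big_nil ?big_cons // dvalD IH. Qed.

Lemma qpath_eq (p q : path) : psrc p = psrc q -> parr p = parr q -> p = q.
Proof.
case: p q => s l H [s' l' H'] /= E1 E2; subst.
by rewrite (Prop_irrelevance H H').
Qed.

Lemma dval_pbasis (r s : path) : dval (pbasis K r) s = (r == s)%:R.
Proof.
rewrite /pbasis /dinj /= /dinj_fun; case: pselect => [E|NE].
  by subst s; rewrite eqxx.
by case: eqP.
Qed.

Lemma pmul_eq (r q : path) (H : ptgt r = psrc q) : pmul K r q = pbasis K (pcat H).
Proof. by rewrite /pmul; case: pselect => [H'|//]; rewrite (Prop_irrelevance H' H). Qed.

Lemma pmul_neq (r q : path) : ptgt r <> psrc q -> pmul K r q = 0.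
Proof. by rewrite /pmul; case: pselect. Qed.

Lemma supp_seq (xs : seq KQ) : exists S : seq path, uniq S /\
  forall x r, x \in xs -> dval x r <> 0 -> r \in S.
Proof.
have : finite_set (\bigcup_(x in [set` xs]) [set r | dval x r <> 0]).
  apply: bigcup_finite; first exact: finite_seq.
  by move=> x _; apply: dvalP.
move/finite_fsetP => [X HX]; exists (finmap.enum_fset X); split; first exact: finmap.fset_uniq.
move=> x r xin Hr.
have : (\bigcup_(x in [set` xs]) [set r | dval x r <> 0]) r by exists x.
by rewrite HX.
Qed.

Lemma kq_actE (x : KQ) q (S : seq path) : uniq S -> (forall r, dval x r <> 0 -> r \in S) ->
  kq_act x q = \sum_(r <- S) dval x r *: pmul K r q.
Proof.
move=> uS HS; rewrite /kq_act fsbig_supp; apply: fsbig_fwiden => //.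
  move=> r [_ /= Hr]; apply: HS => H0; apply: Hr; by rewrite H0 scale0r.
move=> r [_ Hn] /=; apply: contra_notP Hn => Fr; by split.
Qed.

Lemma kq_actDZ a (x y : KQ) q : kq_act (a *: x + y) q = a *: kq_act x q + kq_act y q.
Proof.
have [S [uS HS]] := supp_seq [:: x; y].
have Hx : forall r, dval x r <> 0 -> r \in S by move=> r; apply: HS; rewrite !inE eqxx ?orbT.
have Hy : forall r, dval y r <> 0 -> r \in S by move=> r; apply: HS; rewrite !inE eqxx ?orbT.
have Hxy : forall r, dval (a *: x + y) r <> 0 -> r \in S.
  move=> r; rewrite dvalD dvalZ => H.
  have [H0|H0] := pselect (dval x r = 0); last exact: Hx.
  by apply: Hy => H1; apply: H; rewrite H0 H1 scaler0 addr0.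
rewrite (kq_actE q uS Hxy) (kq_actE q uS Hx) (kq_actE q uS Hy).
under eq_bigr do rewrite dvalD dvalZ scalerDl -scalerA.
by rewrite big_split scaler_sumr.
Qed.

Lemma kq_act0 q : kq_act (0 : KQ) q = 0.
Proof.
have H0 : forall r, dval (0 : KQ) r <> 0 -> r \in [::] by move=> r; rewrite dval0.
by rewrite (kq_actE q (S := [::]) erefl H0) big_nil.
Qed.
Lemma kq_actD (x y : KQ) q : kq_act (x + y) q = kq_act x q + kq_act y q.
Proof. by move: (kq_actDZ 1 x y q); rewrite !scale1r. Qed.
Lemma kq_actZ a (x : KQ) q : kq_act (a *: x) q = a *: kq_act x q.
Proof. by move: (kq_actDZ a x 0 q); rewrite !addr0 kq_act0 addr0. Qed.
Lemma kq_act_sum (J : Type) (S : seq J) (c : J -> K) (G : J -> KQ) q :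
  kq_act (\sum_(j <- S) c j *: G j) q = \sum_(j <- S) c j *: kq_act (G j) q.
Proof.
elim: S => [|j S IH]; rewrite ?big_nil ?kq_act0 // !big_cons.
by rewrite kq_actD kq_actZ IH.
Qed.

Lemma kq_act_basis (r q : path) : kq_act (pbasis K r) q = pmul K r q.
Proof.
have H1 : forall s, dval (pbasis K r) s <> 0 -> s \in [:: r].
  by move=> s; rewrite dval_pbasis inE; case: eqP => // ->.
by rewrite (kq_actE q (S := [:: r]) erefl H1) big_seq1 dval_pbasis eqxx scale1r.
Qed.

Lemma kq_assoc (x : KQ) (p q : path) (H : ptgt p = psrc q) :
  kq_act (kq_act x p) q = kq_act x (pcat H).
Proof.
have [S [uS HS]] := supp_seq [:: x].
have HS' : forall r, dval x r <> 0 -> r \in S by move=> r; apply: HS; rewrite inE.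
rewrite (kq_actE _ uS HS') (kq_actE _ uS HS') kq_act_sum; apply: eq_bigr => r _.
congr (_ *: _).
have [Hr|Hr] := pselect (ptgt r = psrc p).
  rewrite pmul_eq kq_act_basis.
  have Hr2 : ptgt (pcat Hr) = psrc q by rewrite ptgt_pcat.
  have Hr3 : ptgt r = psrc (pcat H) by [].
  rewrite (pmul_eq Hr2) (pmul_eq Hr3); congr (pbasis K _).
  by apply: qpath_eq => //=; rewrite catA.
by rewrite pmul_neq // kq_act0 pmul_neq.
Qed.

Lemma kq_zero (x : KQ) (p q : path) : ptgt p <> psrc q -> kq_act (kq_act x p) q = 0.
Proof.
move=> H.
have [S [uS HS]] := supp_seq [:: x].
have HS' : forall r, dval x r <> 0 -> r \in S by move=> r; apply: HS; rewrite inE.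
rewrite (kq_actE _ uS HS') kq_act_sum big1 // => r _.
have [Hr|Hr] := pselect (ptgt r = psrc p).
  by rewrite pmul_eq kq_act_basis pmul_neq ?scaler0 // ptgt_pcat.
by rewrite pmul_neq // kq_act0 scaler0.
Qed.

Lemma kq_short (x : KQ) (q s : path) : (size (parr s) < size (parr q))%N -> dval (kq_act x q) s = 0.
Proof.
move=> Hs.
have [S [uS HS]] := supp_seq [:: x].
have HS' : forall r, dval x r <> 0 -> r \in S by move=> r; apply: HS; rewrite inE.
rewrite (kq_actE _ uS HS') dval_sum big1 // => r _.
rewrite dvalZ.
have [Hr|Hr] := pselect (ptgt r = psrc q); last by rewrite pmul_neq // dval0 scaler0.
rewrite pmul_eq dval_pbasis; case: eqP => [E|_]; last by rewrite scaler0.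
by move: Hs; rewrite -E /= size_cat ltnNge leq_addl.
Qed.

Lemma kq_triv w (p : path) : psrc p = w -> kq_act (pbasis K (triv w)) p = pbasis K p.
Proof.
move=> E; rewrite kq_act_basis.
have H : ptgt (triv w) = psrc p by rewrite E.
by rewrite (pmul_eq H); congr (pbasis K _); apply: qpath_eq.
Qed.

End KQ.
Section GXsec.
Variables (K : fieldType) (Q : quiver) (X : rep K Q).
Hypothesis HX : rep_linear X.
Local Notation M := (dsum (rsp X)).
Local Notation path := (qpath Q).
Definition gact (m : M) (p : path) : M := @mact _ _ (GX X) m p.

Lemma gactE (m : M) (p : path) :
  gact m p = dinj (F:=rsp X) (w:=ptgt p) (rpath (X:=X) (p:=p) (dval m (psrc p))).
Proof. by []. Qed.

Lemma lin0 (U V : lmodType K) (f : U -> V) :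
  (forall a x y, f (a *: x + y) = a *: f x + f y) -> f 0 = 0.
Proof.
move=> Hf; have := Hf (-1) 0 0.
by rewrite scaler0 addr0 scaleN1r addNr.
Qed.

Lemma cast_lin (u w : qV Q) (E : u = w) a x y :
  eq_rect u (rsp X) (a *: x + y) w E = a *: eq_rect u (rsp X) x w E + eq_rect u (rsp X) y w E.
Proof. by case: w / E. Qed.

Lemma rpathl_lin w l (H : composable w l) a x y :
  rpathl (X:=X) H (a *: x + y) = a *: rpathl H x + rpathl H y.
Proof.
elim: l w H x y => [|b l IH] w H x y //=.
by rewrite cast_lin (@HX b) IH.
Qed.

Lemma rpathl0 w l (H : composable w l) : rpathl (X:=X) H 0 = 0.
Proof. by apply: lin0 => a x y; apply: rpathl_lin. Qed.

Lemma dinj_lin (w : qV Q) a (x y : rsp X w) : dinj (F:=rsp X) (a *: x + y) = a *: dinj (F:=rsp X) x + dinj (F:=rsp X) y.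
Proof.
apply: dsum_eq; apply: functional_extensionality_dep => u /=.
rewrite /dinj_fun; case: pselect => [E|_]; first by case: u / E.
by rewrite scaler0 addr0.
Qed.

Lemma dinj0 (w : qV Q) : dinj (F:=rsp X) (0 : rsp X w) = 0.
Proof. by apply: lin0 => a x y; apply: dinj_lin. Qed.

Lemma dval_dinj_eq (w : qV Q) (x : rsp X w) : dval (dinj (F:=rsp X) x) w = x.
Proof.
rewrite /= /dinj_fun; case: pselect => [E|//].
by rewrite (Prop_irrelevance E erefl).
Qed.

Lemma dval_dinj_neq (w u : qV Q) (x : rsp X w) : w <> u -> dval (dinj (F:=rsp X) x) u = 0.
Proof. by rewrite /= /dinj_fun; case: pselect. Qed.

Lemma gact_lin p a (m m' : M) : gact (a *: m + m') p = a *: gact m p + gact m' p.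
Proof. by rewrite /gact /= /rpath rpathl_lin dinj_lin. Qed.

Lemma gact0 p : gact 0 p = 0.
Proof. by apply: (lin0 (f := fun m : M => gact m p)) => a x y; apply: gact_lin. Qed.

Lemma gact_local (m m' : M) p : dval m (psrc p) = dval m' (psrc p) -> gact m p = gact m' p.
Proof. by rewrite /gact /= => ->. Qed.

Lemma rpathl_cat w l1 l2 (H1 : composable w l1) (H2 : composable (endpt w l1) l2)
  (H12 : composable w (l1 ++ l2)) x :
  dinj (F:=rsp X) (rpathl H12 x) = dinj (F:=rsp X) (rpathl H2 (rpathl (X:=X) H1 x)).
Proof.
elim: l1 w H1 H2 H12 x => [|a l1 IH] w H1 H2 H12 x /=.
  by rewrite (Prop_irrelevance H12 H2).
rewrite (Prop_irrelevance (proj1 H12) (proj1 H1)).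
exact: IH.
Qed.

Lemma gact_assoc (m : M) (p q : path) (H : ptgt p = psrc q) :
  gact (gact m p) q = gact m (pcat H).
Proof.
case: q H => u l2 Hq /= H; subst u.
rewrite !gactE dval_dinj_eq.
symmetry; exact: (rpathl_cat (pok p) Hq).
Qed.

Lemma gact_zero (m : M) (p q : path) : ptgt p <> psrc q -> gact (gact m p) q = 0.
Proof.
move=> H; rewrite !gactE dval_dinj_neq //.
by rewrite /rpath rpathl0 dinj0.
Qed.

End GXsec.
Section Ext.
Variables (K : fieldType) (Q : quiver) (X : rep K Q).
Hypothesis HX : rep_linear X.
Variables (v : nat -> qV Q) (arr : nat -> qA Q).
Hypothesis Hv : injective v.
Hypothesis Hs : forall j, qs (arr j) = v j.+1.
Hypothesis Ht : forall j, qt (arr j) = v j.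
Variable ell : forall j, rsp X (v j.+1) -> K.
Hypothesis Hell : forall j a x y, @ell j (a *: x + y) = a * @ell j x + @ell j y.
Local Notation M := (dsum (rsp X)).
Local Notation KQ := (KQcar K Q).
Local Notation path := (qpath Q).
Local Notation gact := (gact (X:=X)).

Definition Lam (b : qA Q) (m : M) : K :=
  match pselect (exists j, arr j = b) with
  | left H => let j := proj1_sig (cid H) in @ell j (dval m (v j.+1))
  | right _ => 0
  end.

Lemma arr_inj : injective arr.
Proof. by move=> i j E; have := Hs i; rewrite E Hs => /Hv [->]. Qed.

Lemma Lam_arr j m : Lam (arr j) m = @ell j (dval m (v j.+1)).
Proof.
rewrite /Lam; case: pselect => [H|NH]; last by exfalso; apply: NH; exists j.
case: (cid H) => j' Hj' /=.
by have E := arr_inj Hj'; subst j'.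
Qed.

Lemma Lam_lin b a (m m' : M) : Lam b (a *: m + m') = a * Lam b m + Lam b m'.
Proof.
rewrite /Lam; case: pselect => [H|NH]; last by rewrite mulr0 addr0.
by case: (cid H) => j Hj /=; rewrite Hell.
Qed.

Lemma Lam_local b (m m' : M) : dval m (qs b) = dval m' (qs b) -> Lam b m = Lam b m'.
Proof.
rewrite /Lam; case: pselect => [H|NH] // E.
case: (cid H) => j Hj /=; subst b.
by move: E; rewrite Hs => ->.
Qed.

Definition Gc (b : qA Q) (m : M) : KQ := Lam b m *: pbasis K (triv (qt b)).

Lemma Gc_lin b a (m m' : M) : Gc b (a *: m + m') = a *: Gc b m + Gc b m'.
Proof. by rewrite /Gc Lam_lin scalerDl scalerA. Qed.

Fixpoint cll (w : qV Q) (l : seq (qA Q)) : composable w l -> M -> KQ :=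
  match l return composable w l -> M -> KQ with
  | [::] => fun _ _ => 0
  | b :: l' => fun H m =>
      kq_act (Gc b m) (@QPath Q (qt b) l' (proj2 H)) + @cll (qt b) l' (proj2 H) (gact m (parrow b))
  end.

Lemma cll_cons w b l (H : composable w (b :: l)) (m : M) :
  cll H m = kq_act (Gc b m) (@QPath Q (qt b) l (proj2 H)) + @cll (qt b) l (proj2 H) (gact m (parrow b)).
Proof. by []. Qed.

Definition cc (m : M) (p : path) : KQ := cll (pok p) m.

Lemma cll_lin w l (H : composable w l) a (m m' : M) :
  cll H (a *: m + m') = a *: cll H m + cll H m'.
Proof.
elim: l w H m m' => [|b l IH] w H m m' /=; first by rewrite scaler0 addr0.
rewrite Gc_lin kq_actDZ gact_lin // IH scalerDr.
by rewrite -!addrA; congr (_ + _); rewrite addrCA.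
Qed.

Lemma cll0 w l (H : composable w l) : cll H 0 = 0.
Proof. by apply: (lin0 (f := cll H)) => a x y; apply: cll_lin. Qed.

Lemma cll_local w l (H : composable w l) (m m' : M) :
  dval m w = dval m' w -> cll H m = cll H m'.
Proof.
case: l H => [|b l] H E //=.
have E' : dval m (qs b) = dval m' (qs b) by rewrite (proj1 H).
rewrite /Gc (Lam_local E') (@gact_local _ _ X m m' (parrow b)) //.
Qed.

Lemma cll_cocycle w l1 (H1 : composable w l1) (q : path) (H : endpt w l1 = psrc q)
  (H12 : composable w (l1 ++ parr q)) (m : M) :
  cll H12 m = kq_act (cll H1 m) q + cc (gact m (@QPath Q w l1 H1)) q.
Proof.
elim: l1 w H1 H H12 m => [|b l1 IH] w H1 H H12 m.
  rewrite /= kq_act0 add0r /cc.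
  case: q H H12 => u lq Hq /= H H12; subst u.
  rewrite (Prop_irrelevance H12 Hq); apply: cll_local.
  by rewrite gactE dval_dinj_eq.
rewrite /= (IH (qt b) (proj2 H1) H (proj2 H12)) kq_actD addrA.
congr (_ + _ + _).
  rewrite (kq_assoc _ (p := @QPath Q (qt b) l1 (proj2 H1)) (q := q) H).
  by congr kq_act; apply: qpath_eq.
congr cc; rewrite gact_assoc //; congr gact; apply: qpath_eq => //=.
exact: (proj1 H1).
Qed.

Lemma cc_cocycle (m : M) (p q : path) (H : ptgt p = psrc q) :
  cc m (pcat H) = kq_act (cc m p) q + cc (gact m p) q.
Proof.
case: p H => w l1 H1 H.
exact: (cll_cocycle H1 H).
Qed.

Lemma cll_zero w l (H : composable w l) (m : M) (q : path) :
  endpt w l <> psrc q -> kq_act (cll H m) q = 0.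
Proof.
elim: l w H m => [|b l IH] w H m /= Hne; first by rewrite kq_act0.
by rewrite kq_actD kq_zero // IH // add0r.
Qed.

Lemma cc_zero1 (m : M) (p q : path) : ptgt p <> psrc q -> kq_act (cc m p) q = 0.
Proof. by case: p => w l H /= Hne; apply: cll_zero. Qed.

Lemma cc_zero2 (m : M) (p q : path) : ptgt p <> psrc q -> cc (gact m p) q = 0.
Proof.
move=> Hne; rewrite /cc (@cll_local _ _ (pok q) _ 0) ?cll0 //.
by rewrite gactE dval_dinj_neq.
Qed.

Lemma cll_short w l (H : composable w l) (m : M) (s : path) :
  (size l <= size (parr s))%N -> dval (cll H m) s = 0.
Proof.
elim: l w H m => [|b l IH] w H m Hsz; first by [].
rewrite cll_cons dvalD (IH _ _ _ (leq_trans (leqnSn _) Hsz)) addr0.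
rewrite /Gc kq_actZ kq_triv // dvalZ dval_pbasis.
case: eqP => [E|_]; last by rewrite scaler0.
by subst s; move: Hsz; rewrite ltnn.
Qed.

Definition Ecar : lmodType K := (KQ * M)%type.
Definition eact (e : Ecar) (p : path) : Ecar := (kq_act e.1 p + cc e.2 p, gact e.2 p).
Definition Emod : kqmod K Q := @KQMod K Q Ecar eact.

Lemma Emod_ok : is_kqmod Emod.
Proof.
split; [|split].
- move=> p a [n m] [n' m'] /=.
  rewrite /eact /= kq_actDZ /cc cll_lin gact_lin //.
  apply/pair_equal_spec; split => /=.
    by rewrite scalerDr addrACA.
  by [].
- move=> [n m] p q H /=.
  rewrite /eact /= kq_actD kq_assoc cc_cocycle gact_assoc // addrA.
  done.
- move=> [n m] p q H /=.
  rewrite /eact /= kq_actD kq_zero // cc_zero1 // cc_zero2 // gact_zero // !addr0.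
  done.
Qed.
Definition iE (n : KQ) : Ecar := (n, 0).
Definition piE (e : Ecar) : M := e.2.

Lemma iE_hom : kqhom (M:=KQreg K Q) (N:=Emod) iE.
Proof.
split.
  move=> a n n'; rewrite /iE; apply/pair_equal_spec; split => //=.
  by rewrite scaler0 addr0.
move=> n p /=; rewrite /eact /iE /=; apply/pair_equal_spec; split => /=.
  by rewrite /cc cll0 addr0.
by rewrite gact0.
Qed.

Lemma piE_hom : kqhom (M:=Emod) (N:=GX X) piE.
Proof. by split. Qed.

Fixpoint L (j : nat) : seq (qA Q) := if j is j'.+1 then arr j' :: L j' else [::].

Lemma Lok j : composable (v j) (L j).
Proof. elim: j => [|j IH] //=; split; [exact: Hs | by rewrite Ht]. Qed.

Lemma L_end j : endpt (v j) (L j) = v 0.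
Proof. by elim: j => [|j IH] //=; rewrite Ht. Qed.

Lemma size_L j : size (L j) = j.
Proof. by elim: j => [|j IH] //=; rewrite IH. Qed.

Definition chain j : path := @QPath Q (v j) (L j) (Lok j).

Lemma chain_inj : injective chain.
Proof. by move=> i j /(f_equal (@psrc Q)) /= /Hv. Qed.

Lemma key (h : M -> KQ) (Hh : forall m p, h (gact m p) = kq_act (h m) p + cc m p) j
  (x : rsp X (v j.+1)) :
  dval (h (gact (dinj x) (chain j.+1))) (chain j) = @ell j x.
Proof.
rewrite Hh dvalD kq_short ?add0r; last by rewrite /= !size_L.
rewrite /cc /chain.
have -> := cll_cons (b:=arr j) (l:=L j) (Lok j.+1).
rewrite dvalD cll_short ?addr0; last by rewrite /= size_L.
rewrite /Gc kq_actZ kq_triv // dvalZ dval_pbasis Lam_arr dval_dinj_eq.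
have -> : @QPath Q (qt (arr j)) (L j) (proj2 (Lok j.+1)) == @QPath Q (v j) (L j) (Lok j).
  by apply/eqP; apply: qpath_eq => //=; rewrite Ht.
exact: mulr1.
Qed.

Lemma dinj_move (w u : qV Q) (E : w = u) (z : rsp X w) :
  exists y : rsp X u, dinj (F:=rsp X) z = dinj (F:=rsp X) y.
Proof. by case: u / E; exists z. Qed.

Lemma lin_bigsum (U V : lmodType K) (f : U -> V) (I : Type) (r : seq I) (P : pred I)
  (c : I -> K) (g : I -> U) :
  (forall a x y, f (a *: x + y) = a *: f x + f y) ->
  f (\sum_(i <- r | P i) c i *: g i) = \sum_(i <- r | P i) c i *: f (g i).
Proof.
move=> Hf; elim/big_rec2: _ => [|i y1 y2 _ <-]; first exact: lin0.
exact: Hf.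
Qed.

Lemma dval_bigsum (I : Type) (r : seq I) (P : pred I) (F : I -> KQ) t :
  dval (\sum_(i <- r | P i) F i) t = \sum_(i <- r | P i) dval (F i) t.
Proof. by elim/big_rec2: _ => // i y1 y2 _ <-. Qed.

Lemma nat_into_seq (T : eqType) (f : nat -> T) (S : seq T) :
  injective f -> (forall j, f j \in S) -> False.
Proof.
move=> finj fS.
have U : uniq (map f (iota 0 (size S).+1)) by rewrite map_inj_uniq // iota_uniq.
have : {subset map f (iota 0 (size S).+1) <= S} by move=> x /mapP [j _ ->].
move/(uniq_leq_size U); by rewrite size_map size_iota ltnn.
Qed.

Variable xj : forall j, rsp X (v j.+1).
Hypothesis Hxj : forall j, @ell j (xj j) <> 0.
Hypothesis Hfd : findim (rsp X (v 0)).

Lemma no_section :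
  ~ (exists sigma : M -> Ecar, kqhom (M:=GX X) (N:=Emod) sigma /\ forall m, piE (sigma m) = m).
Proof.
move=> [sigma [[Hlin Hhom] Hsec]].
pose h m := (sigma m).1.
have Hh : forall m p, h (gact m p) = kq_act (h m) p + cc m p.
  move=> m p; rewrite /h.
  have := Hhom m p => /= ->.
  by rewrite /eact /= -/(piE (sigma m)) Hsec.
have hlin : forall a m m', h (a *: m + m') = a *: h m + h m'.
  by move=> a m m'; rewrite /h Hlin.
pose phi (y : rsp X (v 0)) := h (dinj (F:=rsp X) y).
have philin : forall a y z, phi (a *: y + z) = a *: phi y + phi z.
  by move=> a y z; rewrite /phi dinj_lin hlin.
have Hj : forall j, exists y, dval (phi y) (chain j) <> 0.
  move=> j.
  have [y Ey] := dinj_move (L_end j.+1)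
     (rpath (X:=X) (p:=chain j.+1) (dval (dinj (F:=rsp X) (xj j)) (psrc (chain j.+1)))).
  have E2 : gact (dinj (F:=rsp X) (xj j)) (chain j.+1) = dinj (F:=rsp X) y.
    by rewrite -Ey.
  exists y; rewrite /phi -E2 (key Hh); exact: Hxj.
have [s Hs'] := Hfd.
have [S [uS HS]] := supp_seq (map phi s).
apply: (nat_into_seq chain_inj (S := S)) => j.
have [y Hy] := Hj j; have [c Ec] := Hs' y.
have Esum : dval (phi y) (chain j) = \sum_(i < size s) c i * dval (phi s`_i) (chain j).
  by rewrite Ec (@lin_bigsum _ _ phi _ _ _ _ _ philin) dval_bigsum.
have [i Hi] : exists i : 'I_(size s), dval (phi s`_i) (chain j) <> 0.
  apply: contra_notP Hy => Hall; rewrite Esum big1 // => i _.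
  have -> : dval (phi s`_i) (chain j) = 0 by apply: contra_notP Hall => ?; exists i.
  by rewrite mulr0.
apply: (HS (phi s`_i)) => //; apply: map_f; exact: mem_nth.
Qed.
End Ext.
Theorem proposition1p10 (K : closedFieldType) (Q : quiver)
    (v : nat -> qV Q) (X : rep K Q) :
  acyclic Q ->
  injective v ->
  (forall n : nat, exists a : qA Q, qs a = v n.+1 /\ qt a = v n) ->
  rep_linear X ->
  rep_findim X ->
  (forall n : nat, exists x : rsp X (v n), x <> 0%R) ->
  (forall n : nat, exists k : nat,
      rep_iso_on (reachable (v n)) X (rep_pow k (Fe K (v n)))) ->
  Ext1_neq0 (GX X) (KQreg K Q).
Proof.
move=> _ Hv Harr HXl Hfd Hnz Hiso.
have /choice [arr Harr'] := Harr.
have Hs : forall j, qs (arr j) = v j.+1 by move=> j; case: (Harr' j).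
have Ht : forall j, qt (arr j) = v j by move=> j; case: (Harr' j).
have Hex : forall j, exists ex : (rsp X (v j.+1) -> K) * rsp X (v j.+1),
    (forall a x y, ex.1 (a *: x + y) = a * ex.1 x + ex.1 y) /\ ex.1 ex.2 <> 0.
  move=> j.
  have [x Hx] := Hnz j.+1.
  have [k [phi [Hphi _]]] := Hiso j.+1.
  have Hr : reachable (v j.+1) (v j.+1) by exists (triv (v j.+1)).
  have [Hl Hb] := Hphi (v j.+1) Hr.
  have phi0 : phi (v j.+1) 0 = 0 by apply: (lin0 (f := phi (v j.+1))) => a y z; apply: Hl.
  have Hpx : phi (v j.+1) x <> 0.
    move=> E; apply: Hx; case: Hb => g Hg1 Hg2.
    by rewrite -(Hg1 x) E -phi0 Hg1.
  have [i Hi] : exists i, phi (v j.+1) x i <> 0.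
    apply: contra_notP Hpx => H; apply/ffunP => i; rewrite ffunE.
    by apply: contra_notP H => ?; exists i.
  have [t Ht'] : exists t, dval (phi (v j.+1) x i) t <> 0.
    apply: contra_notP Hi => H; apply: dsum_eq; apply: functional_extensionality_dep => t /=.
    by apply: contra_notP H => ?; exists t.
  exists ((fun y => dval (phi (v j.+1) y i) t), x); split => //= a y z.
  by rewrite Hl !ffunE.
pose ell j := (proj1_sig (cid (Hex j))).1.
pose xj j := (proj1_sig (cid (Hex j))).2.
have Hell : forall j a x y, ell j (a *: x + y) = a * ell j x + ell j y.
  by move=> j; rewrite /ell; case: (cid (Hex j)) => [[f x] [H1 H2]] /=.
have Hxj : forall j, ell j (xj j) <> 0.
  by move=> j; rewrite /ell /xj; case: (cid (Hex j)) => [[f x] [H1 H2]] /=.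
exists (Emod arr ell), (iE X), (@piE _ _ X).
split; first exact: (Emod_ok HXl Hs Hell).
split; first exact: (iE_hom HXl arr Hell).
split; first exact: piE_hom.
split; first by move=> n n' [].
split; first by move=> m; exists (0, m).
split.
  move=> [n m]; rewrite /piE /iE /=; split => [->|[n' [_ <-]]] //.
  by exists n.
exact: (no_section Hv Hs Ht (xj := xj) Hxj (Hfd (v 0))).
Qed.
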